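(* Let $\mathcal{A}=(\mathcal{H},|s_0\rangle,\Sigma,\{U_\sigma\}_{\sigma\in\Sigma},F)$ be a quantum automaton. For any $w\in\Sigma^+$ and any $\varepsilon>0$, there is a positive integer $k$ such that $$f^{\mathrm{D}}_{\mathcal{A}}(uw^kv)\ge f^{\mathrm{D}}_{\mathcal{A}}(uv)-\varepsilon$$ for all $u\in\Sigma^*$ and $v\in\Sigma^\omega$. Moreover, if $\mathcal{H}$ is $n$-dimensional, there is a constant $c$ such that such a $k$ can be chosen with $k\le(c\varepsilon)^{-n}$.
   Context: A quantum automaton is a tuple $\mathcal{A}=(\mathcal{H},|s_0\rangle,\Sigma,\{U_\sigma:\sigma\in\Sigma\},F)$ where $\mathcal{H}$ is a finite-dimensional complex Hilbert space, $|s_0\rangle$ a unit vector, $\Sigma$ a finite alphabet, each $U_\sigma$ unitary, and $F$ a subspace of $\mathcal{H}$. Let $w=\sigma_1\sigma_2\cdots\in\Sigma^\omega$, let $|\psi\rangle\in F$ be a unit vector, and let $0\le n_1<n_2<\cdots$ be a strictly increasing sequence of checkpoints. The disturbing run of $\mathcal{A}$ over $w$ under the measurement $\{|\psi\rangle\langle\psi|, I-|\psi\rangle\langle\psi|\}$ with checkpoints $\{n_i\}$ is the sequence $|s_0\rangle,|s_1\rangle,\dots$ where $|s_0\rangle$ is the initial state and, for $n\ge1$, $|s_n\rangle=U_{\sigma_n}|\psi\rangle$ if $n-1=n_i$ for some $i$, and $|s_n\rangle=U_{\sigma_n}|s_{n-1}\rangle$ otherwise (i.e. after each checkpoint the state is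 reset to $|\psi\rangle$). The disturbing Büchi acceptance probability is $$f^{\mathrm{D}}_{\mathcal{A}}(w)=\sup_{|\psi\rangle\in F,\ \||\psi\rangle\|=1}\sup_{\{n_i\}}\inf_{i\ge1}|\langle\psi|s_{n_i}\rangle|^2,$$ where $|s_n\rangle$ is the disturbing run under $|\psi\rangle$ and $\{n_i\}$. *)

(* Defs.v *)
From HB Require Import structures.
From mathcomp Require Import all_boot all_order all_algebra.
From mathcomp Require Import complex spectral.
From mathcomp Require Import boolp classical_sets reals constructive_ereal ereal.

Set Implicit Arguments.
Unset Strict Implicit.
Unset Printing Implicit Defensive.

Import Order.TTheory GRing.Theory Num.Theory.
Local Open Scope ring_scope.
Local Open Scope classical_set_scope.
Local Open Scope sesquilinear_scope.

Record qautomaton (R : realType) (n : nat) (Sigma : finType) := QAutomaton {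
  qa_init : 'cV[R[i]]_n;
  qa_U : Sigma -> 'M[R[i]]_n;
  qa_F : 'M[R[i]]_n;                         (* F = row space of qa_F, as a subspace of C^n *)
  qa_init_unit : (qa_init^t* *m qa_init) 0 0 = 1;
  qa_U_unitary : forall s, qa_U s \is unitarymx
}.

Section QA.
Variables (R : realType) (n : nat) (Sigma : finType).

Definition braket (phi psi : 'cV[R[i]]_n) : R[i] := (phi^t* *m psi) 0 0.

Definition prob (phi psi : 'cV[R[i]]_n) : R := let z := braket phi psi in complex.Re z ^+ 2 + complex.Im z ^+ 2.

Definition in_subspace (F : 'M[R[i]]_n) (psi : 'cV[R[i]]_n) : bool :=
  (psi^T <= F)%MS.

Definition unit_vector (psi : 'cV[R[i]]_n) : Prop := braket psi psi = 1.

Definition checkpoints (ns : nat -> nat) : Prop := forall i, (ns i < ns i.+1)%N.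

(** The infinite word w is indexed from 0,
    so the letter sigma_{m+1} of the paper is [w m]. *)
Fixpoint drun (A : qautomaton R n Sigma) (w : nat -> Sigma) (psi : 'cV[R[i]]_n)
    (ns : nat -> nat) (m : nat) : 'cV[R[i]]_n :=
  match m with
  | 0 => qa_init A
  | m'.+1 => qa_U A (w m') *m
             (if `[< exists i, ns i = m' >] then psi else drun A w psi ns m')
  end.

Definition fD (A : qautomaton R n Sigma) (w : nat -> Sigma) : \bar R :=
  ereal_sup [set ereal_sup [set ereal_inf
       [set ((prob psi (drun A w psi ns (ns i)))%:E) | i in [set: nat]]
     | ns in checkpoints]
   | psi in [set psi | in_subspace (qa_F A) psi /\ unit_vector psi]].

End QA.

Definition prepend (Sigma : Type) (u : seq Sigma) (v : nat -> Sigma) : nat -> Sigma :=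
  fun i => if (i < size u)%N then nth (v 0%N) u i else v (i - size u)%N.

Definition wpow (Sigma : Type) (w : seq Sigma) (k : nat) : seq Sigma :=
  flatten (nseq k w).

(* Main.v *)
Require Import Defs.
From HB Require Import structures.
From mathcomp Require Import all_boot all_order all_algebra.
From mathcomp Require Import complex spectral.
From mathcomp Require Import boolp classical_sets reals constructive_ereal ereal.
From mathcomp Require Import zify lra.
Import Order.TTheory GRing.Theory Num.Theory.
Local Open Scope ring_scope.
Local Open Scope sesquilinear_scope.

Section PartC.
Variables (R : realType) (n : nat) (Sigma : finType) (A : qautomaton R n Sigma).

Definition matw (s : seq Sigma) : 'M[R[i]]_n :=
  foldl (fun M a => qa_U A a *m M) 1%:M s.

Lemma foldl_matw s (M : 'M[R[i]]_n) : foldl (fun M a => qa_U A a *m M) M s = matw s *m M.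
Proof.
rewrite /matw; elim: s M => [|a s IH] M /=; first by rewrite mul1mx.
by rewrite IH [in RHS]IH mulmx1 mulmxA.
Qed.

Lemma matw_cat s1 s2 : matw (s1 ++ s2) = matw s2 *m matw s1.
Proof. by rewrite {1}/matw foldl_cat foldl_matw. Qed.

Lemma matw_rcons s a : matw (rcons s a) = qa_U A a *m matw s.
Proof. by rewrite -cats1 matw_cat /matw /= mulmx1. Qed.

Lemma unitary_tr_mul (M : 'M[R[i]]_n) : M \is unitarymx -> M^t* *m M = 1%:M.
Proof. by move=> MU; have := mulmxKtV (1%:M : 'M_n) MU erefl; rewrite mul1mx. Qed.

Lemma matw_unitary s : matw s \is unitarymx.
Proof.
elim/last_ind: s => [|s a IH].
  by apply/unitarymxP; rewrite /matw /= trmx1 map_mx1 mulmx1.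
by rewrite matw_rcons mul_unitarymx // qa_U_unitary.
Qed.

Lemma braket_mul (M : 'M[R[i]]_n) (phi y : 'cV[R[i]]_n) :
  braket phi (M *m y) = braket (M^t* *m phi) y.
Proof.
by rewrite /braket [in RHS]trmx_mul [in RHS]map_mxM trmxCK mulmxA.
Qed.

Lemma braket_unitary (M : 'M[R[i]]_n) (y z : 'cV[R[i]]_n) :
  M \is unitarymx -> braket (M *m y) (M *m z) = braket y z.
Proof.
by move=> MU; rewrite braket_mul mulmxA unitary_tr_mul // mul1mx.
Qed.

Lemma prob_mul (M : 'M[R[i]]_n) (phi y : 'cV[R[i]]_n) :
  prob phi (M *m y) = prob (M^t* *m phi) y.
Proof. by rewrite /prob braket_mul. Qed.

Lemma unit_mul (M : 'M[R[i]]_n) y : M \is unitarymx -> unit_vector y -> unit_vector (M *m y).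
Proof. by move=> MU; rewrite /unit_vector braket_unitary. Qed.

Lemma unit_trC (M : 'M[R[i]]_n) y : M \is unitarymx -> unit_vector y -> unit_vector (M^t* *m y).
Proof. by move=> MU; apply: unit_mul; rewrite trmxC_unitary. Qed.

Lemma drun_unit z psi ns m : unit_vector psi -> unit_vector (drun A z psi ns m).
Proof.
move=> Hpsi; elim: m => [|m IH] /=.
  exact: qa_init_unit.
by apply: unit_mul; [exact: qa_U_unitary | case: ifP].
Qed.

Definition close (T : 'M[R[i]]_n) (eps : R) :=
  forall phi y, unit_vector phi -> unit_vector y -> prob phi y - eps <= prob phi (T *m y).


Section Shift.
Variables (u W : seq Sigma) (v : nat -> Sigma) (psi : 'cV[R[i]]_n) (ns : nat -> nat).
Hypothesis W_neq0 : W != [::].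
Local Notation L := (size u).
Local Notation K := (size W).
Local Notation z := (prepend u v).
Local Notation z' := (prepend (u ++ W) v).
Definition ns' i := if (ns i <= L)%N then ns i else (ns i + K)%N.

Lemma K_gt0 : (0 < K)%N.
Proof. by case: W W_neq0. Qed.

Lemma pz1 i : (i < L)%N -> z' i = z i.
Proof.
by move=> iL; rewrite /prepend size_cat ltn_addr // nth_cat iL.
Qed.

Lemma pz2 j : (j < K)%N -> z' (L + j) = nth (v 0%N) W j.
Proof.
move=> jK; rewrite /prepend size_cat ltn_add2l jK nth_cat ltnNge leq_addr /=.
by rewrite addKn.
Qed.

Lemma pz3 i : (L <= i)%N -> z' (i + K) = z i.
Proof.
move=> Li; rewrite /prepend size_cat ltn_add2r ltnNge Li /=.
by rewrite subnDr.
Qed.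

Lemma ns'_incr : checkpoints ns -> checkpoints ns'.
Proof.
move=> H i; have := H i; rewrite /ns'.
case: ifP => h1; case: ifP => h2 //= h; try lia.
Qed.

Lemma ck1 m : (m <= L)%N -> (exists i, ns' i = m) <-> (exists i, ns i = m).
Proof.
move=> mL; split=> -[i hi]; exists i; move: hi; rewrite /ns'.
  by case: ifP => // h0 h; lia.
by move=> h; rewrite h mL.
Qed.

Lemma ck2 m : (L < m)%N -> (m <= L + K)%N -> ~ (exists i, ns' i = m).
Proof.
move=> h1 h2 [j]; rewrite /ns'; case: ifP => h3 h4; lia.
Qed.

Lemma ck3 m : (L < m)%N -> (exists i, ns' i = (m + K)%N) <-> (exists i, ns i = m).
Proof.
move=> mL; split=> -[i hi]; exists i; move: hi; rewrite /ns'.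
  case: ifP => h; lia.
move=> h; rewrite h; case: ifP => h'; lia.
Qed.

Local Notation D := (drun A z psi ns).
Local Notation D' := (drun A z' psi ns').
Definition xL := if `[< exists i, ns i = L >] then psi else D L.

Lemma d1 m : (m <= L)%N -> D' m = D m.
Proof.
elim: m => [//|m IH] Hm /=.
rewrite pz1 // IH ?(ltnW Hm) //.
by rewrite (asbool_equiv_eq (ck1 _ (ltnW Hm))).
Qed.

Lemma d2 j : (0 < j)%N -> (j <= K)%N -> D' (L + j) = matw (take j W) *m xL.
Proof.
elim: j => [//|j IH] _ Hj.
case: j IH Hj => [|j] IH Hj.
  have := pz2 0 K_gt0; rewrite addn0 => E.
  rewrite addn1 /= E d1 //.
  rewrite (asbool_equiv_eq (ck1 _ (leqnn L))).
  rewrite (take_nth (v 0%N)) ?K_gt0 // take0 matw_rcons /matw /= mulmx1 //.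
rewrite addnS /= pz2 //.
rewrite asboolF; last by apply: ck2; lia.
rewrite IH // 1?ltnW //.
by rewrite (take_nth (v 0%N) Hj) matw_rcons mulmxA.
Qed.

Lemma d3 m : (L < m)%N -> exists (W0 : 'M[R[i]]_n) (b : bool), W0 \is unitarymx /\
  D m = W0 *m (if b then xL else psi) /\
  D' (m + K) = W0 *m (if b then matw W *m xL else psi).
Proof.
elim: m => [//|m IH] Hm.
have [mL|mL] := leqP m L.
  have -> : m = L by lia.
  exists (qa_U A (z L)), true; split; first exact: qa_U_unitary.
  split; first by [].
  rewrite addSn /= pz3 // asboolF; last by apply: ck2; have := K_gt0; lia.
  by rewrite d2 ?K_gt0 // take_size.
have [W0 [b [W0U [E1 E2]]]] := IH mL.
rewrite addSn /= pz3 1?ltnW // (asbool_equiv_eq (ck3 _ mL)).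
case: ifP => _.
  exists (qa_U A (z m)), false; split; first exact: qa_U_unitary.
  by [].
exists (qa_U A (z m) *m W0), b; split; first by rewrite mul_unitarymx // qa_U_unitary.
by rewrite E1 E2 !mulmxA.
Qed.

Lemma shift_point (eps : R) i : 0 <= eps -> close (matw W) eps -> unit_vector psi ->
  prob psi (D (ns i)) - eps <= prob psi (D' (ns' i)).
Proof.
move=> eps0 Hc Hpsi.
rewrite /ns'; case: ifP => h.
  by rewrite d1 // lerBlDr lerDl.
have hL : (L < ns i)%N by rewrite ltnNge h.
have [W0 [b [W0U [E1 E2]]]] := d3 (ns i) hL.
rewrite E1 E2 !prob_mul; case: b {E1 E2}.
  apply: Hc; first exact: unit_trC.
  by rewrite /xL; case: ifP => // _; exact: drun_unit.
by rewrite lerBlDr lerDl.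
Qed.

End Shift.

Lemma shift_fD (W : seq Sigma) (eps : R) : W != [::] -> 0 <= eps -> close (matw W) eps ->
  forall u v, (fD A (prepend u v) - eps%:E <= fD A (prepend (u ++ W) v))%E.
Proof.
move=> W0 eps0 Hc u v.
rewrite leeBlDr //.
apply: ge_ereal_sup => _ [psi [Fpsi Upsi] <-].
apply: ge_ereal_sup => _ [ns Hns <-].
rewrite -leeBlDr //.
apply: (@le_trans _ _ (ereal_inf [set (prob psi (drun A (prepend (u ++ W) v) psi (ns' u W ns)
     (ns' u W ns i)))%:E | i in [set: nat]])).
  apply: le_ereal_inf_tmp => _ [i _ <-].
  have H1 := @ereal_inf_lbound R [set (prob psi (drun A (prepend u v) psi ns (ns i0)))%:E
        | i0 in [set: nat]] _ (ex_intro2 _ _ i I erefl).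
  apply: le_trans (leeB H1 (lexx _)) _.
  rewrite -EFinB lee_fin; exact: shift_point.
apply: (@le_trans _ _ (ereal_sup [set ereal_inf [set (prob psi (drun A (prepend (u ++ W) v) psi ns0
     (ns0 i)))%:E | i in [set: nat]] | ns0 in checkpoints])).
  by apply: ereal_sup_ubound; exists (ns' u W ns) => //; exact: ns'_incr.
by apply: ereal_sup_ubound; exists psi.
Qed.

End PartC.

Section PartB.
Variable R : realType.
Local Notation C := R[i].

Lemma amgm (x y : C) : 2%:R * (`|x| * `|y|) <= x^* * x + y^* * y.
Proof.
rewrite -!normCKC.
have hr : `|x| - `|y| \is Num.real by rewrite rpredB // normr_real.
have := exprn_ge0 2 (normr_ge0 (`|x| - `|y|)).
rewrite real_normK // sqrrB addrAC subr_ge0.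
by rewrite mulr_natl.
Qed.

Lemma sum_amgm n (a b : 'I_n -> C) :
  \sum_l (a l)^* * a l = 1 -> \sum_l (b l)^* * b l = 1 ->
  \sum_l `|a l| * `|b l| <= 1.
Proof.
move=> ha hb.
have h2 : 2%:R * (\sum_l `|a l| * `|b l|) <= 2%:R.
  rewrite mulr_sumr.
  apply: le_trans (ler_sum _ (fun l _ => amgm (a l) (b l))) _.
  by rewrite big_split /= ha hb.
have h2p : (0 : C) < 2%:R by rewrite ltr0n.
by rewrite -(ler_pM2l h2p) mulr1.
Qed.

Local Open Scope complex_scope.

Lemma normC_sqrt (z : C) : `|z| = (Num.sqrt (complex.Re z ^+ 2 + complex.Im z ^+ 2))%:C.
Proof. exact: normc_def. Qed.

Lemma close_sum n (a b e : 'I_n -> C) (d : R) : 0 <= d ->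
  \sum_l (a l)^* * a l = 1 -> \sum_l (b l)^* * b l = 1 ->
  (forall l, `|e l - 1| <= d%:C) ->
  forall S0 S1, S0 = \sum_l (a l)^* * b l -> S1 = \sum_l (a l)^* * (e l * b l) ->
  complex.Re S0 ^+ 2 + complex.Im S0 ^+ 2 - 2%:R * d <= complex.Re S1 ^+ 2 + complex.Im S1 ^+ 2.
Proof.
move=> d0 ha hb he S0 S1 hS0d hS1d.
have hab := @sum_amgm n a b ha hb.
have hS0 : `|S0| <= 1.
  rewrite hS0d.
  apply: le_trans (ler_norm_sum _ _ _) _.
  apply: le_trans hab; apply: ler_sum => l _.
  by rewrite normrM norm_conjC.
have hE : `|S1 - S0| <= d%:C.
  rewrite hS0d hS1d -sumrB.
  apply: le_trans (ler_norm_sum _ _ _) _.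
  apply: le_trans (_ : \sum_l d%:C * (`|a l| * `|b l|) <= _).
    apply: ler_sum => l _.
    rewrite (_ : _ - _ = (a l)^* * (e l - 1) * b l); last by rewrite mulrBr mulrBl mulr1 !mulrA.
    rewrite !normrM norm_conjC mulrCA mulrA.
    apply: ler_wpM2r; first by rewrite normr_ge0.
    by apply: ler_wpM2l; [exact: normr_ge0 | exact: he].
  rewrite -mulr_sumr -[X in _ <= X]mulr1; apply: ler_wpM2l => //.
  by rewrite ler0c.
have htri : `|S0| <= `|S1| + `|S1 - S0|.
  rewrite {1}(_ : S0 = S1 - (S1 - S0)); last by rewrite opprB addrC subrK.
  exact: ler_normB.
move: hS0 htri hE; rewrite !normC_sqrt.
set N0 := Num.sqrt _; set N1 := Num.sqrt _; set N2 := Num.sqrt _.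
move=> h1 h2 h3.
have h4 : (N0 <= N1 + d)%R.
  rewrite -lecR rmorphD /=; apply: le_trans h2 _; by rewrite lerD2l.
have h5 : (N0 <= 1)%R by rewrite -lecR.
have n0 : (0 <= N0)%R by rewrite sqrtr_ge0.
have n1 : (0 <= N1)%R by rewrite sqrtr_ge0.
have e0 : complex.Re S0 ^+ 2 + complex.Im S0 ^+ 2 = N0 ^+ 2.
  by rewrite sqr_sqrtr // addr_ge0 // sqr_ge0.
have e1 : complex.Re S1 ^+ 2 + complex.Im S1 ^+ 2 = N1 ^+ 2.
  by rewrite sqr_sqrtr // addr_ge0 // sqr_ge0.
rewrite e0 e1.
have [hd|hd] := leP N0 d; first by nra.
nra.
Qed.

End PartB.
Local Open Scope sesquilinear_scope.

Section Spec.
Variables (R : realType) (n : nat).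
Local Notation C := R[i].

Lemma unitary_normal (U : 'M[C]_n) : U \is unitarymx -> U \is normalmx.
Proof.
move=> UU; apply/normalmxP.
by rewrite (unitarymxP UU) unitary_tr_mul.
Qed.

Lemma spectral_unitary (U : 'M[C]_n) : U \is unitarymx ->
  exists (P : 'M[C]_n) (d : 'rV[C]_n), [/\ P \is unitarymx,
    (forall l, `|d 0 l| = 1) & U = P^t* *m diag_mx d *m P].
Proof.
move=> UU.
have /orthomx_spectralP E := unitary_normal _ UU.
set P := spectralmx U in E; set d := spectral_diag U in E.
have PU : P \is unitarymx by exact: spectral_unitarymx.
rewrite invmx_unitary // in E.
exists P, d; split => // l.
have ED : diag_mx d = P *m U *m P^t*.
  rewrite E !mulmxA (unitarymxP PU) mul1mx -!mulmxA (unitarymxP PU) mulmx1 //.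
have DU : diag_mx d \is unitarymx.
  by rewrite ED !mul_unitarymx // trmxC_unitary.
have := unitarymxP DU.
rewrite tr_diag_mx map_diag_mx mulmx_diag => /matrixP /(_ l l).
rewrite !mxE eqxx mulr1n => h.
have : `|d 0 l| ^+ 2 = 1 by rewrite normCK.
move/eqP; rewrite sqrp_eq1 ?normr_ge0 //; by move/eqP.
Qed.
Definition mpow (M : 'M[C]_n) k := iter k (fun X => X *m M) 1%:M.

Lemma mpow_spec (P : 'M[C]_n) d k : P \is unitarymx ->
  mpow (P^t* *m diag_mx d *m P) k = P^t* *m diag_mx (\row_l (d 0 l ^+ k)) *m P.
Proof.
move=> PU; elim: k => [|k IH].
  rewrite /mpow /= (_ : (\row_l d 0 l ^+ 0) = const_mx 1); last first.
    by apply/matrixP => i j; rewrite !mxE expr0.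
  by rewrite diag_const_mx mulmx1 unitary_tr_mul.
rewrite /mpow iterS -/(mpow _ k) IH !mulmxA -(mulmxA _ P) (unitarymxP PU) mulmx1.
rewrite -(mulmxA _ (diag_mx _) (diag_mx d)) mulmx_diag.
congr (_ *m diag_mx _ *m _).
by apply/matrixP => i j; rewrite !mxE exprSr.
Qed.

End Spec.
Section Spec2.
Variables (R : realType) (n : nat).
Local Notation C := R[i].

Lemma braket_sum (a c : 'cV[C]_n) : braket a c = \sum_l (a l 0)^* * c l 0.
Proof. by rewrite /braket mxE; apply: eq_bigr => l _; rewrite !mxE. Qed.

Lemma close_diag (P : 'M[C]_n) (e : 'rV[C]_n) (d : R) : P \is unitarymx -> 0 <= d ->
  (forall l, `|e 0 l - 1| <= d%:C%C) -> @close R n (P^t* *m diag_mx e *m P) (2%:R * d).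
Proof.
move=> PU d0 he phi y hphi hy.
rewrite -!mulmxA prob_mul trmxCK.
rewrite -[prob phi y](_ : prob (P *m phi) (P *m y) = _); last first.
  by rewrite /prob braket_unitary.
have ha : \sum_l ((P *m phi) l 0)^* * (P *m phi) l 0 = 1.
  by rewrite -braket_sum; exact: unit_mul.
have hb : \sum_l ((P *m y) l 0)^* * (P *m y) l 0 = 1.
  by rewrite -braket_sum; exact: unit_mul.
apply: (@close_sum R n _ _ (fun l => e 0 l) d d0 ha hb) => //.
- exact: braket_sum.
- by rewrite braket_sum; apply: eq_bigr => l _; rewrite mul_diag_mx; congr (_ * _); rewrite mxE.
Qed.

End Spec2.

Section Pig.
Variable R : realType.

Lemma oct_y (a1 b1 a2 b2 : R) : 0 <= a1 -> 0 <= a2 -> 0 <= b1 -> 0 <= b2 ->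
  a1 <= b1 -> a2 <= b2 -> a1 ^+ 2 + b1 ^+ 2 = 1 -> a2 ^+ 2 + b2 ^+ 2 = 1 ->
  `|b1 - b2| <= `|a1 - a2|.
Proof.
move=> ha1 ha2 hb1 hb2 h1 h2 e1 e2.
have pb1 : 0 < b1 by nra.
have pb2 : 0 < b2 by nra.
have key : (b1 - b2) * (b1 + b2) = (a2 - a1) * (a2 + a1) by nra.
have : `|b1 - b2| * (b1 + b2) = `|a1 - a2| * (a1 + a2).
  by rewrite -(ger0_norm (addr_ge0 ha1 ha2)) -(gtr0_norm (addr_gt0 pb1 pb2)) -!normrM key
    !normrM (distrC a2) (addrC a2).
move=> E.
have : `|b1 - b2| * (b1 + b2) <= `|a1 - a2| * (b1 + b2).
  rewrite E; apply: ler_wpM2l; [exact: normr_ge0 | lra].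
by rewrite ler_pM2r // addr_gt0.
Qed.

Lemma trunc_close (t1 t2 : R) (M : nat) : 0 <= t1 -> 0 <= t2 -> (0 < M)%N ->
  Num.truncn (M%:R * t1) = Num.truncn (M%:R * t2) -> `|t1 - t2| <= M%:R^-1.
Proof.
move=> h1 h2 hM E.
have m0 : (0 : R) < M%:R by rewrite ltr0n.
have /andP [l1 u1] := truncn_itv (mulr_ge0 (ltW m0) h1).
have /andP [l2 u2] := truncn_itv (mulr_ge0 (ltW m0) h2).
rewrite E in l1 u1.
move: (Num.truncn _) l1 u1 l2 u2 => N l1 u1 l2 u2.
rewrite -natr1 in u1 u2.
have hd : `|M%:R * t1 - M%:R * t2| <= 1.
  rewrite ler_norml; apply/andP; split; lra.
rewrite -mulrBr normrM (gtr0_norm m0) in hd.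
by rewrite -(ler_pM2l m0) mulfV ?gt_eqF.
Qed.

Local Open Scope complex_scope.

Lemma unit_re_im (z : R[i]) : `|z| = 1 -> complex.Re z ^+ 2 + complex.Im z ^+ 2 = 1.
Proof.
move=> h; have := normc_def z; rewrite h => /(congr1 (@complex.Re R)) /= h1.
by rewrite -(@sqr_sqrtr _ (complex.Re z ^+ 2 + complex.Im z ^+ 2)) ?addr_ge0 ?sqr_ge0 // -h1 expr1n.
Qed.

Lemma same_sign_dist (x1 x2 : R) : (0 <= x1) = (0 <= x2) -> `|x1 - x2| = `| `|x1| - `|x2| |.
Proof.
case: (lerP 0 x1) => h1; case: (lerP 0 x2) => h2 // _.
- by rewrite (ger0_norm h1) (ger0_norm h2).
- by rewrite (ltr0_norm h1) (ltr0_norm h2) -opprD normrN.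
Qed.

Definition bin (M : nat) (z : R[i]) : bool * bool * bool * 'I_M.+1 :=
  let x := complex.Re z in let y := complex.Im z in
  (0 <= x, 0 <= y, `|x| <= `|y|,
   inord (Num.truncn (M%:R * (if `|x| <= `|y| then `|x| else `|y|)))).

Lemma abs_le1 (x y : R) : x ^+ 2 + y ^+ 2 = 1 -> `|x| <= 1.
Proof.
move=> h; case: (lerP 0 x) => hx; [rewrite ger0_norm // | rewrite ltr0_norm //]; nra.
Qed.

Lemma trunc_small (M : nat) (t : R) : 0 <= t -> t <= 1 -> (Num.truncn (M%:R * t) < M.+1)%N.
Proof.
move=> h0 h1; rewrite ltnS truncn_le_nat -natr1.
have : M%:R * t <= M%:R :> R by rewrite -[X in _ <= X]mulr1 ler_wpM2l.
lra.
Qed.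

Lemma core (M : nat) (x1 y1 x2 y2 : R) : (0 < M)%N ->
  x1 ^+ 2 + y1 ^+ 2 = 1 -> x2 ^+ 2 + y2 ^+ 2 = 1 ->
  (0 <= x1) = (0 <= x2) -> (0 <= y1) = (0 <= y2) -> (`|x1| <= `|y1|) = (`|x2| <= `|y2|) ->
  inord (Num.truncn (M%:R * (if `|x1| <= `|y1| then `|x1| else `|y1|))) =
  inord (Num.truncn (M%:R * (if `|x2| <= `|y2| then `|x2| else `|y2|))) :> 'I_M.+1 ->
  `|x1 - x2| <= M%:R^-1 /\ `|y1 - y2| <= M%:R^-1.
Proof.
move=> M0 u1 u2 sx sy f.
have ax1 := @abs_le1 x1 y1 u1; have ax2 := @abs_le1 x2 y2 u2.
have ay1 : `|y1| <= 1 by apply: (@abs_le1 y1 x1); rewrite addrC.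
have ay2 : `|y2| <= 1 by apply: (@abs_le1 y2 x2); rewrite addrC.
have v1 : `|x1| ^+ 2 + `|y1| ^+ 2 = 1 by rewrite !real_normK ?num_real.
have v2 : `|x2| ^+ 2 + `|y2| ^+ 2 = 1 by rewrite !real_normK ?num_real.
rewrite (same_sign_dist _ _ sx) (same_sign_dist _ _ sy) f.
case hf : (`|x2| <= `|y2|); rewrite hf in f.
  move=> /(congr1 (@nat_of_ord _)) /=.
rewrite inordK; last by apply: trunc_small => //; exact: normr_ge0.
rewrite inordK; last by apply: trunc_small => //; exact: normr_ge0.
move=> E.
  have hx := trunc_close _ _ _ (normr_ge0 x1) (normr_ge0 x2) M0 E.
  split => //; apply: le_trans _ hx.
  by apply: oct_y => //; exact: normr_ge0.
move=> /(congr1 (@nat_of_ord _)) /=.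
rewrite inordK; last by apply: trunc_small => //; exact: normr_ge0.
rewrite inordK; last by apply: trunc_small => //; exact: normr_ge0.
move=> E.
have hy := trunc_close _ _ _ (normr_ge0 y1) (normr_ge0 y2) M0 E.
split => //; apply: le_trans _ hy.
apply: oct_y; try exact: normr_ge0.
- by apply: ltW; rewrite ltNge f.
- by apply: ltW; rewrite ltNge hf.
- by rewrite addrC.
- by rewrite addrC.
Qed.

Lemma ReB (a b : R[i]) : complex.Re (a - b) = complex.Re a - complex.Re b.
Proof. by case: a; case: b. Qed.
Lemma ImB (a b : R[i]) : complex.Im (a - b) = complex.Im a - complex.Im b.
Proof. by case: a; case: b. Qed.

Lemma bin_close (M : nat) (z1 z2 : R[i]) : (0 < M)%N -> `|z1| = 1 -> `|z2| = 1 ->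
  bin M z1 = bin M z2 -> `|z1 - z2| <= (2%:R / M%:R)%:C.
Proof.
move=> M0 n1 n2.
have u1 := unit_re_im _ n1; have u2 := unit_re_im _ n2.
have hz : `|z1 - z2| <= (`|complex.Re z1 - complex.Re z2| + `|complex.Im z1 - complex.Im z2|)%:C.
  rewrite normc_def lecR.
  rewrite ReB ImB.
  move: (complex.Re z1 - complex.Re z2) (complex.Im z1 - complex.Im z2) => p q.
  rewrite -(ger0_norm (addr_ge0 (normr_ge0 p) (normr_ge0 q))) -sqrtr_sqr.
  apply: ler_wsqrtr; rewrite sqrrD !real_normK ?num_real //.
  rewrite -addrA lerD2l addrC lerDl.
  by rewrite mulrn_wge0 // mulr_ge0 // normr_ge0.
rewrite /bin => -[sx sy f E].
have [hx hy] := core _ _ _ _ _ M0 u1 u2 sx sy f E.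
apply: le_trans hz _; rewrite lecR.
have -> : 2%:R / M%:R = M%:R^-1 + M%:R^-1 :> R by rewrite mulr_natl mulr2n.
exact: lerD.
Qed.

Lemma pigeon (n M : nat) (d : 'rV[R[i]]_n) : (0 < M)%N -> (forall l, `|d 0 l| = 1) ->
  exists k, [/\ (0 < k)%N, (k <= (8 * M.+1) ^ n)%N &
    forall l, `|d 0 l ^+ k - 1| <= (2%:R / M%:R)%:C].
Proof.
move=> M0 hd.
pose T := {ffun 'I_n -> bool * bool * bool * 'I_M.+1}.
have cT : #|T| = ((8 * M.+1) ^ n)%N.
  by rewrite card_ffun !card_prod card_bool !card_ord.
pose f := fun m : 'I_(#|T|).+1 => [ffun l => bin M (d 0 l ^+ m)] : T.
have [i [j [lij Eij]]] : exists i j : 'I_(#|T|).+1, (i < j)%N /\ f i = f j.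
  apply: contrapT => H.
  have inj : injective f.
    move=> i j E; case: (ltngtP i j) => h.
    - by exfalso; apply: H; exists i, j.
    - by exfalso; apply: H; exists j, i.
    - exact: val_inj.
  by have := leq_card _ inj; rewrite card_ord ltnn.
exists (j - i)%N; split.
- by rewrite subn_gt0.
- rewrite -cT; have := ltn_ord j; lia.
move=> l.
have := congr1 (fun g : T => g l) Eij; rewrite /f !ffunE => hb.
have n1 : forall m, `|d 0 l ^+ m| = 1 by move=> m; rewrite normrX hd expr1n.
have := bin_close _ _ _ M0 (n1 j) (n1 i) (esym hb).
rewrite -(subnKC (ltnW lij)) exprD -{2}(mulr1 (d 0 l ^+ i)) -mulrBr normrM n1 mul1r.
by rewrite addKn.
Qed.

End Pig.
Local Open Scope sesquilinear_scope.

Section Final.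
Variables (R : realType) (n : nat) (Sigma : finType) (A : qautomaton R n Sigma).

Lemma matw_wpow (w : seq Sigma) k : matw R n Sigma A (wpow w k) = mpow R n (matw R n Sigma A w) k.
Proof.
elim: k => [//|k IH].
by rewrite /mpow iterS -/(mpow R n _ k) -IH -matw_cat.
Qed.

Lemma close_mono (T : 'M[R[i]]_n) e1 e2 : close R n T e1 -> e1 <= e2 -> close R n T e2.
Proof.
move=> h le phi y a b; apply: le_trans (h phi y a b); by rewrite lerB.
Qed.

Lemma wpow_neq0 (w : seq Sigma) k : w != [::] -> (0 < k)%N -> wpow w k != [::].
Proof. by case: k => // k; case: w. Qed.

Lemma main_k (w : seq Sigma) (eps : R) : w != [::] -> 0 < eps ->
  exists k, [/\ (0 < k)%N, (k <= (8 * (Num.truncn (4%:R / eps)).+2) ^ n)%N &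
    forall u v, (fD A (prepend (u ++ wpow w k) v) >= fD A (prepend u v) - eps%:E)%E].
Proof.
move=> wne eps0.
set M := (Num.truncn (4%:R / eps)).+1.
have UU := matw_unitary R n Sigma A w.
have [P [d [PU hd EU]]] := spectral_unitary _ _ _ UU.
have M0 : (0 < M)%N by [].
have [k [k0 kb hk]] := pigeon _ _ _ _ M0 hd.
exists k; split => // u v.
apply: shift_fD; [exact: wpow_neq0 | exact: ltW |].
rewrite matw_wpow EU mpow_spec //.
have d0 : (0 : R) <= 2%:R / M%:R by rewrite divr_ge0 // ler0n.
have hk' : forall l, `|(\row_l (d 0 l ^+ k)) 0 l - 1| <= (2%:R / M%:R)%:C%C.
  by move=> l; rewrite mxE; exact: hk.
apply: (close_mono _ _ _ (close_diag _ _ _ _ _ PU d0 hk')).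
have hM : 4%:R / eps < M%:R by exact: truncnS_gt.
have Mp : (0 : R) < M%:R by rewrite ltr0n.
rewrite mulrA ler_pdivrMr // mulrC.
rewrite ltr_pdivrMr // in hM.
rewrite (_ : 2%:R * 2%:R = 4%:R :> R); last by rewrite -natrM.
by rewrite mulrC; exact: ltW.
Qed.

End Final.

Theorem theorem3 (R : realType) (n : nat) (Sigma : finType)
    (A : qautomaton R n Sigma) :
  (forall (w : seq Sigma), w != [::] -> forall eps : R, 0 < eps ->
     exists k : nat, (0 < k)%N /\
       forall (u : seq Sigma) (v : nat -> Sigma),
         (fD A (prepend (u ++ wpow w k) v) >= fD A (prepend u v) - eps%:E)%E)
  /\
  (exists c : R, 0 < c /\
     forall (w : seq Sigma), w != [::] -> forall eps : R, 0 < eps -> eps <= 1 ->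
       exists k : nat, (0 < k)%N /\ k%:R <= (c * eps) ^- n /\
         forall (u : seq Sigma) (v : nat -> Sigma),
           (fD A (prepend (u ++ wpow w k) v) >= fD A (prepend u v) - eps%:E)%E).
Proof.
split.
  move=> w wne eps eps0.
  have [k [k0 _ hk]] := main_k _ _ _ A _ _ wne eps0.
  by exists k.
exists (48%:R)^-1; split; first by rewrite invr_gt0 ltr0n.
move=> w wne eps eps0 eps1.
have [k [k0 kb hk]] := main_k _ _ _ A _ _ wne eps0.
exists k; split => //; split => //.
rewrite -exprVn invfM invrK.
set t := Num.truncn (4%:R / eps).
have ht : t%:R <= 4%:R / eps :> R by rewrite truncn_le divr_ge0 // ltW.
have ie : 1 <= eps^-1 by rewrite invf_ge1.
have h8 : (8 * t.+2)%:R <= 48%:R * eps^-1 :> R.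
  rewrite (_ : (8 * t.+2)%:R = 8%:R * (t%:R + 2%:R) :> R); last first.
    by rewrite natrM -[t.+2]addn2 natrD.
  lra.
apply: le_trans (_ : ((8 * t.+2)%:R : R) ^+ n <= _).
  by rewrite -natrX ler_nat.
apply: lerXn2r; rewrite ?nnegrE ?ler0n //.
by rewrite mulr_ge0 ?ler0n // invr_ge0 ltW.
Qed.
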